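(* Let $\Gamma$ be a distance-regular graph with diameter $D\ge3$ and $a_1\ne0$. Let $\sigma_0,\dots,\sigma_D$ be a feasible pseudo cosine sequence, let $\rho_0,\dots,\rho_D$ be a nontrivial pseudo cosine sequence such that $\sigma_0,\dots,\sigma_D$ and $\rho_0,\dots,\rho_D$ form a tight pair, and let $\varepsilon$ be the corresponding auxiliary parameter. Then $\sigma_j-\varepsilon\sigma_{j-1}\ne0$ for $1\le j\le D$ and $$\rho_i=\prod_{j=1}^{i}\frac{\sigma_{j-1}-\varepsilon\sigma_j}{\sigma_j-\varepsilon\sigma_{j-1}}\qquad(0\le i\le D).$$
   Context: $\Gamma$ is a finite connected undirected graph without loops or multiple edges, distance-regular with diameter $D$, intersection numbers $a_i,b_i,c_i$ ($c_0=0$, $b_D=0$), valency $k$, $c_i+a_i+b_i=k$. For $\theta\in\mathbb{R}$ the pseudo cosine sequence for $\theta$ is the sequence of reals $\sigma_0,\dots,\sigma_D$ with $\sigma_0=1$ and $c_i\sigma_{i-1}+a_i\sigma_i+b_i\sigma_{i+1}=\theta\sigma_i$ for $0\le i\le D-1$; nontrivial means $\sigma_1\ne1$. Pseudo cosine sequences $\sigma_i$, $\rho_i$ form a tight pair if $(\sigma_i\rho_i)_{i=0}^D$ is a pseudo cosine sequence. For a tight pair of nontrivial pseudo cosine sequences, an auxiliary parameter is a real $\varepsilon$ with $\sigma_i\rho_i-\sigma_{i-1}\rho_{i-1}=\varepsilon(\sigma_{i-1}\rho_i-\sigma_i\rho_{i-1})$ for $1\le i\le D$. When $a_1\ne0$: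 a nontrivial pseudo cosine sequence is tight if some nontrivial pseudo cosine sequence forms a tight pair with it; a pseudo cosine sequence $\sigma_0,\dots,\sigma_D$ is feasible if it is tight and $\sigma_{i-1}\ne\sigma_{i+1}$ for $1\le i\le D-1$. *)

(* Defs.v *)
From HB Require Import structures.
From mathcomp Require Import all_boot all_order all_algebra.
Set Implicit Arguments. Unset Strict Implicit. Unset Printing Implicit Defensive.
Import Order.TTheory GRing.Theory Num.Theory.
Local Open Scope ring_scope.

Definition simple_graph (T : finType) (e : rel T) : Prop :=
  symmetric e /\ irreflexive e.

Definition connected_graph (T : finType) (e : rel T) : Prop :=
  forall x y : T, connect e x y.

Definition walkn (T : finType) (e : rel T) (x y : T) (n : nat) : bool :=
  [exists p : n.-tuple T, path e x p && (last x p == y)].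

(* graph distance: the least n with a walk of length n from x to y
   (searched below #|T|, which suffices in a connected graph) *)
Definition gdist (T : finType) (e : rel T) (x y : T) : nat :=
  find (walkn e x y) (iota 0 #|T|).

Definition distance_regular (T : finType) (e : rel T) (D : nat)
    (a b c : nat -> nat) : Prop :=
  [/\ simple_graph e, connected_graph e,
      (forall x y, (gdist e x y <= D)%N), (exists x y, gdist e x y = D) &
      forall x y : T, let i := gdist e x y in
        [/\ #|[set z | e y z & (gdist e x z).+1 == i]| = c i,
            #|[set z | e y z & gdist e x z == i]| = a i &
            #|[set z | e y z & gdist e x z == i.+1]| = b i]].

Section Pseudo.
Variable R : realFieldType.
Variables (D : nat) (a b c : nat -> nat).

Definition pseudo_cosine_for (theta : R) (s : nat -> R) : Prop :=
  s 0%N = 1 /\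
  forall i, (i < D)%N ->
    (c i)%:R * s i.-1 + (a i)%:R * s i + (b i)%:R * s i.+1 = theta * s i.

Definition pseudo_cosine (s : nat -> R) : Prop :=
  exists theta, pseudo_cosine_for theta s.

Definition nontrivial_pc (s : nat -> R) : Prop :=
  pseudo_cosine s /\ s 1%N != 1.

Definition tight_pair (s r : nat -> R) : Prop :=
  pseudo_cosine s /\ pseudo_cosine r /\ pseudo_cosine (fun i => s i * r i).

Definition auxiliary_parameter (s r : nat -> R) (eps : R) : Prop :=
  forall i, (1 <= i <= D)%N ->
    s i * r i - s i.-1 * r i.-1 = eps * (s i.-1 * r i - s i * r i.-1).

Definition tight_pc (s : nat -> R) : Prop :=
  nontrivial_pc s /\ exists r, nontrivial_pc r /\ tight_pair s r.

Definition feasible_pc (s : nat -> R) : Prop :=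
  pseudo_cosine s /\ tight_pc s /\
  forall i, (1 <= i <= D.-1)%N -> s i.-1 != s i.+1.

End Pseudo.

(* Main.v *)
Require Import Defs.
From HB Require Import structures.
From mathcomp Require Import all_boot all_order all_algebra.
From mathcomp Require Import zify.
Import Order.TTheory GRing.Theory Num.Theory.
From mathcomp Require Import ring lra.
Section GraphPart.
Local Set Implicit Arguments. Local Unset Strict Implicit.

Section Graph.
Variables (T : finType) (e : rel T).

Lemma walknP x y n : reflect (exists p : seq T, [/\ size p = n, path e x p & last x p = y]) (walkn e x y n).
Proof.
apply: (iffP existsP) => [[p /andP[hp /eqP hl]]|[p [hs hp hl]]].
  by exists (val p); rewrite size_tuple.
have hs' : size p == n by apply/eqP.
by exists (Tuple hs'); rewrite /= hp hl eqxx.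
Qed.

Lemma walkn_cat x y z n m : walkn e x y n -> walkn e y z m -> walkn e x z (n + m).
Proof.
move=> /walknP[p [hs hp hl]] /walknP[q [hs' hq hl']]; apply/walknP.
exists (p ++ q); rewrite size_cat cat_path last_cat hs hs' hp hl hq hl'; split=> //.
Qed.

Lemma walkn_split x y n m : walkn e x y (n + m) -> exists w, walkn e x w n /\ walkn e w y m.
Proof.
move=> /walknP[p [hs hp hl]]; exists (last x (take n p)).
rewrite -(cat_take_drop n p) cat_path in hp; case/andP: hp => hp1 hp2.
split; apply/walknP.
  by exists (take n p); split=> //; rewrite size_take hs; case: ifP => //; lia.
exists (drop n p); split=> //; first by rewrite size_drop hs; lia.
by rewrite -hl -{3}(cat_take_drop n p) last_cat.
Qed.

Hypothesis hc : connected_graph e.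

Lemma walk_small x y : exists2 n, n < #|T| & walkn e x y n.
Proof.
have /connectP[p hp ->] := hc x y.
case: (shortenP hp) => p' hp' hu _.
exists (size p'); last by apply/walknP; exists p'.
have := max_card (mem (x :: p')); rewrite (card_uniqP hu) /=; lia.
Qed.

Lemma gdist_lt x y : gdist e x y < #|T|.
Proof.
case: (walk_small x y) => n hn hw.
have : has (walkn e x y) (iota 0 #|T|) by apply/hasP; exists n => //; rewrite mem_iota; lia.
by rewrite has_find size_iota.
Qed.

Lemma gdist_walk x y : walkn e x y (gdist e x y).
Proof.
case: (walk_small x y) => n hn hw.
have hh : has (walkn e x y) (iota 0 #|T|) by apply/hasP; exists n => //; rewrite mem_iota; lia.
have := nth_find 0 hh; rewrite nth_iota ?add0n //; exact: gdist_lt.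
Qed.

Lemma gdist_min x y m : walkn e x y m -> gdist e x y <= m.
Proof.
move=> hw; case: (ltnP m #|T|) => hm; last by have := gdist_lt x y; lia.
rewrite leqNgt; apply/negP => hlt.
by have := before_find 0 hlt; rewrite nth_iota // hw.
Qed.


Lemma gdist_refl x : gdist e x x = 0.
Proof. apply/eqP; rewrite -leqn0; apply: gdist_min; apply/walknP; by exists [::]. Qed.

Lemma gdist0_eq x z : gdist e x z = 0 -> z = x.
Proof.
move=> h; have := gdist_walk x z; rewrite h => /walknP[p [hs _ hl]].
by case: p hs hl => // _ <-.
Qed.

Lemma walkn1 u w : walkn e u w 1 = e u w.
Proof.
apply/walknP/idP => [[p [hs hp hl]]|h].
  case: p hs hp hl => [|v [|]] //= _; rewrite andbT => h <-; exact: h.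
by exists [:: w]; rewrite /= h.
Qed.

Lemma gdist_nb x y z : e y z -> gdist e x z <= (gdist e x y).+1.
Proof.
move=> h; rewrite -addn1; apply: gdist_min; apply: walkn_cat (gdist_walk x y) _.
by rewrite walkn1.
Qed.

Hypothesis hsym : symmetric e.
Hypothesis hirr : irreflexive e.

Lemma deg_split x y : let i := gdist e x y in
  #|[set z | e y z]| = #|[set z | e y z & (gdist e x z).+1 == i]| +
    #|[set z | e y z & gdist e x z == i]| + #|[set z | e y z & gdist e x z == i.+1]|.
Proof.
move=> i.
set A := [set z | e y z]; set P1 := [set z | (gdist e x z).+1 == i].
set P2 := [set z | gdist e x z == i].
rewrite -(cardsID P1 A) -(cardsID P2 (A :\: P1)) addnA.
have bnd : forall z, e y z -> gdist e x z <= i.+1 /\ i <= (gdist e x z).+1.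
  move=> z h; split; first exact: gdist_nb.
  by apply: gdist_nb; rewrite hsym.
congr (_ + _ + _); apply: eq_card => z; rewrite !inE;
  case h: (e y z); rewrite /= ?andbF //; have := bnd z h; rewrite /i; case=> h1 h2;
  repeat (case: eqP => /=); lia.
Qed.

End Graph.

Lemma graph_facts (T : finType) (e : rel T) D a b c :
  distance_regular e D a b c ->
  [/\ c 0 = 0, a 0 = 0, (forall i, i <= D -> c i + a i + b i = b 0)
    & (forall i, 1 <= i <= D -> 0 < c i)].
Proof.
case=> [[hsym hirr] hc hle [x0 [y0 hD]] hreg].
have deg : forall x y, #|[set z | e y z]| = c (gdist e x y) + a (gdist e x y) + b (gdist e x y).
  move=> x y; rewrite (deg_split hc hsym x y).
  by case: (hreg x y) => -> -> ->.
have c0 : c 0 = 0.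
  case: (hreg x0 x0); rewrite gdist_refl // => <- _ _.
  by apply/eqP; rewrite cards_eq0; apply/eqP/setP => z; rewrite !inE andbF.
have a0 : a 0 = 0.
  case: (hreg x0 x0); rewrite gdist_refl // => _ <- _.
  apply/eqP; rewrite cards_eq0; apply/eqP/setP => z; rewrite !inE.
  apply/negP => /andP[h /eqP /(gdist0_eq hc) hz]; subst z.
  by rewrite hirr in h.
have ex : forall i, i <= D -> exists x w, gdist e x w = i.
  move=> i hi; exists x0.
  have := gdist_walk hc x0 y0; rewrite hD -(subnKC hi) => /walkn_split[w [h1 h2]].
  exists w; apply/eqP; rewrite eqn_leq gdist_min //=; rewrite leqNgt; apply/negP => hlt.
  have := walkn_cat (gdist_walk hc x0 w) h2 => /(gdist_min hc); rewrite hD; lia.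
split=> // [i hi|i /andP[hi1 hi2]].
  case: (ex i hi) => x [w hw].
  by rewrite -hw -(deg x w) (deg w w) gdist_refl // c0 a0.
case: (ex i hi2) => x [w hw].
case: (hreg x w); rewrite hw => <- _ _.
have := gdist_walk hc x w; rewrite hw -(subnK hi1) => /walkn_split[u [h1 h2]].
rewrite walkn1 in h2.
apply/card_gt0P; exists u; rewrite !inE hsym h2 /=.
have g1 := gdist_min hc h1.
have g2 := gdist_nb hc x h2; rewrite hw in g2.
apply/eqP; lia.
Qed.
End GraphPart.
Local Open Scope ring_scope.
Lemma alg (R : realFieldType) (D : nat) (a b c : nat -> nat)
  (s r : nat -> R) (th1 th2 th3 eps : R) :
  (3 <= D)%N -> a 1%N != 0%N -> c 0%N = 0%N -> a 0%N = 0%N ->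
  (forall i, (i <= D)%N -> c i + a i + b i = b 0)%N ->
  (forall i, (1 <= i <= D)%N -> 0 < c i)%N ->
  s 0%N = 1 -> r 0%N = 1 -> s 1%N != 1 -> r 1%N != 1 ->
  (forall i, (i < D)%N -> (c i)%:R * s i.-1 + (a i)%:R * s i + (b i)%:R * s i.+1 = th1 * s i) ->
  (forall i, (i < D)%N -> (c i)%:R * r i.-1 + (a i)%:R * r i + (b i)%:R * r i.+1 = th2 * r i) ->
  (forall i, (i < D)%N -> (c i)%:R * (s i.-1 * r i.-1) + (a i)%:R * (s i * r i)
      + (b i)%:R * (s i.+1 * r i.+1) = th3 * (s i * r i)) ->
  (forall i, (1 <= i <= D.-1)%N -> s i.-1 != s i.+1) ->
  (forall i, (1 <= i <= D)%N -> s i * r i - s i.-1 * r i.-1 = eps * (s i.-1 * r i - s i * r i.-1)) ->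
  (forall j, (1 <= j <= D)%N -> s j - eps * s j.-1 != 0) /\
  (forall i, (i <= D)%N ->
     r i = \prod_(1 <= j < i.+1) ((s j.-1 - eps * s j) / (s j - eps * s j.-1))).
Proof.
move=> hD ha1 c0 a0 hdeg hcpos s0 r0 s1ne r1ne hs hr hp hfeas heps.
set k : R := (b 0)%:R.
have Hth1 : th1 = k * s 1%N.
  by have := hs 0%N (ltac:(lia)); rewrite c0 a0 s0 /= !mul0r !add0r mulr1 => <-.
have Hth2 : th2 = k * r 1%N.
  by have := hr 0%N (ltac:(lia)); rewrite c0 a0 r0 /= !mul0r !add0r mulr1 => <-.
have Hdeg : forall i, (i <= D)%N -> (c i)%:R + (a i)%:R + (b i)%:R = k :> R.
  by move=> i hi; rewrite -!natrD hdeg.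
have Cpos : forall i, (1 <= i <= D)%N -> 0 < (c i)%:R :> R.
  by move=> i hi; rewrite ltr0n hcpos.
have rnz : forall i, (i <= D.-1)%N -> r i != 0.
  elim=> [|i IH] hi; first by rewrite r0 oner_eq0.
  apply/negP => /eqP hri.
  have hri' : r i != 0 by apply: IH; lia.
  have h1 := hr i.+1 (ltac:(lia)); have h2 := hp i.+1 (ltac:(lia)).
  rewrite /= hri !(mulr0, mul0r, addr0) in h1 h2.
  have E : (c i.+1)%:R * r i * (s i.+2 - s i) =
     s i.+2 * ((c i.+1)%:R * r i + (b i.+1)%:R * r i.+2) -
     ((c i.+1)%:R * (s i * r i) + (b i.+1)%:R * (s i.+2 * r i.+2)) by ring.
  rewrite h1 h2 mulr0 subrr in E.
  move/eqP: E; rewrite !mulf_eq0 (negbTE hri') orbF subr_eq0.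
  have -> : ((c i.+1)%:R == 0 :> R) = false by apply/negbTE; rewrite gt_eqF // Cpos //; lia.
  by rewrite /= eq_sym (negbTE (hfeas i.+1 (ltac:(lia)))).
have A1 := heps 1%N (ltac:(lia)); have A2 := heps 2%N (ltac:(lia)); have A3 := heps 3%N (ltac:(lia)).
have S1 := hs 1%N (ltac:(lia)); have S2 := hs 2%N (ltac:(lia)).
have R1 := hr 1%N (ltac:(lia)); have R2 := hr 2%N (ltac:(lia)).
rewrite /= s0 r0 in A1 S1 R1 A2 S2 R2 A3.
rewrite Hth1 in S1 S2; rewrite Hth2 in R1 R2.
have D1 := Hdeg 1%N (ltac:(lia)); have D2 := Hdeg 2%N (ltac:(lia)).
have C1 := Cpos 1%N (ltac:(lia)); have C2 := Cpos 2%N (ltac:(lia)).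
have Ha1 : 0 < (a 1%N)%:R :> R by rewrite ltr0n lt0n.
have Ha2 : 0 <= (a 2%N)%:R :> R by rewrite ler0n.
have Hb1 : 0 <= (b 1%N)%:R :> R by rewrite ler0n.
have Hk : 0 < k by rewrite -(D2); lra.
have r2nz : r 2%N != 0 by apply: rnz; lia.
have epsm1 : eps != -1.
  apply/negP => /eqP he; rewrite he in A1 A2 A3.
  have : (s 1%N + 1) * (r 1%N - 1) = 0 by lra.
  move/eqP; rewrite mulf_eq0 subr_eq0 (negbTE r1ne) orbF addr_eq0 => /eqP hs1.
  rewrite hs1 in S1 S2 A2.
  have hs2 : 1 < s 2%N.
    have : (b 1%N)%:R * (s 2%N - 1) = 2 * (a 1%N)%:R :> R by nra.
    by nra.
  have : (s 2%N + s 1%N) * (r 2%N - r 1%N) = 0 by rewrite hs1; lra.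
  move/eqP; rewrite mulf_eq0 subr_eq0 hs1 => /orP[/eqP|/eqP hr2]; first by lra.
  have : (s 3%N + s 2%N) * (r 3%N - r 2%N) = 0 by lra.
  move/eqP; rewrite mulf_eq0 subr_eq0 addr_eq0 => /orP[/eqP hs3|/eqP hr3].
    rewrite hs3 -D2 in S2.
    have E : (c 2%N)%:R * (s 2%N - 1) + 2 * (a 2%N)%:R * s 2%N = 0 :> R by lra.
    clear -E hs2 C2 Ha2. by nra.
  rewrite hr3 -hr2 in R2.
  have : k * r 2%N * (1 - r 2%N) = 0 by nra.
  move/eqP; rewrite !mulf_eq0 gt_eqF //= (negbTE r2nz) /= subr_eq0 hr2 eq_sym (negbTE r1ne).
  done.
have eps1 : eps != 1.
  apply/negP => /eqP he; rewrite he in A1 A2 A3.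
  have : (s 1%N - 1) * (r 1%N + 1) = 0 by lra.
  move/eqP; rewrite mulf_eq0 subr_eq0 addr_eq0 => /orP[/eqP h|/eqP hr1].
    by move: s1ne; rewrite h eqxx.
  rewrite hr1 in R1 R2 A2.
  have hr2 : 1 < r 2%N.
    have : (b 1%N)%:R * (r 2%N - 1) = 2 * (a 1%N)%:R :> R by nra.
    by nra.
  have : (s 2%N - s 1%N) * (r 2%N + r 1%N) = 0 by rewrite hr1; lra.
  move/eqP; rewrite mulf_eq0 subr_eq0 hr1 => /orP[/eqP hs2|/eqP]; last by lra.
  have : (s 3%N - s 2%N) * (r 3%N + r 2%N) = 0 by lra.
  move/eqP; rewrite mulf_eq0 subr_eq0 addr_eq0 => /orP[/eqP hs3|/eqP hr3].
    rewrite hs3 -hs2 in S2.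
    have : k * s 1%N * (1 - s 1%N) = 0 by nra.
    move/eqP; rewrite !mulf_eq0 gt_eqF //= subr_eq0 => /orP[/eqP hs1|/eqP h]; last first.
      by move: s1ne; rewrite -h eqxx.
    rewrite hs2 hs1 in S1; clear -S1 C1; lra.
  rewrite hr3 -D2 in R2.
  have E : (c 2%N)%:R * (r 2%N - 1) + 2 * (a 2%N)%:R * r 2%N = 0 :> R by lra.
  clear -E hr2 C2 Ha2. by nra.
have nz : forall j, (1 <= j <= D)%N -> s j - eps * s j.-1 != 0.
  case=> [//|i] hj; apply/negP => /eqP hz.
  have hsj : s i.+1 = eps * s i by apply/eqP; rewrite -subr_eq0 hz.
  have Aj := heps i.+1 hj; rewrite /= hsj in Aj.
  have E : s i * r i * ((eps - 1) * (eps + 1)) =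
    (eps * s i * r i.+1 - s i * r i) - eps * (s i * r i.+1 - eps * s i * r i) by ring.
  rewrite Aj subrr in E.
  move/eqP: E; rewrite !mulf_eq0 subr_eq0 addr_eq0 (negbTE eps1) (negbTE epsm1) !orbF.
  rewrite (negbTE (rnz i _)); last by lia.
  rewrite orbF => /eqP hsi.
  rewrite hsi mulr0 in hsj.
  clear hz Aj; case: i hj hsi hsj => [|m] hj hsi hsj.
    by move: hsi; rewrite s0 => /eqP; rewrite oner_eq0.
  have hmD : (m.+1 < D)%N by lia.
  have Sm := hs m.+1 hmD; rewrite /= hsi hsj !mulr0 !addr0 in Sm.
  have cpos : 0 < (c m.+1)%:R :> R by apply: Cpos; lia.
  have hm : s m = 0.
    by move/eqP: Sm; rewrite mulf_eq0 (gt_eqF cpos) /= => /eqP.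
  have hfm : (1 <= m.+1 <= D.-1)%N by lia.
  by have := hfeas m.+1 hfm; rewrite /= hm hsj eqxx.
split=> // i; elim: i => [|i IH] hi; first by rewrite big_geq.
rewrite big_nat_recr //= -IH; last by lia.
have hd := nz i.+1 (ltac:(lia)); rewrite /= in hd.
have Ai := heps i.+1 (ltac:(lia)); rewrite /= in Ai.
rewrite mulrA; apply/(mulIf hd); rewrite divfK //.
apply/eqP; rewrite -subr_eq0.
have -> : r i.+1 * (s i.+1 - eps * s i) - r i * (s i - eps * s i.+1) =
  (s i.+1 * r i.+1 - s i * r i) - eps * (s i * r i.+1 - s i.+1 * r i) by ring.
by rewrite Ai subrr.
Qed.

Theorem lemma15p3 (R : realFieldType) (T : finType) (e : rel T) (D : nat)
    (a b c : nat -> nat)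
    (hG : distance_regular e D a b c) (hD : (3 <= D)%N) (ha1 : a 1%N != 0%N)
    (sigma rho : nat -> R) (eps : R)
    (hsig : feasible_pc (R:=R) D a b c sigma)
    (hrho : nontrivial_pc D a b c rho)
    (htp : tight_pair D a b c sigma rho)
    (heps : auxiliary_parameter D sigma rho eps) :
  (forall j, (1 <= j <= D)%N -> sigma j - eps * sigma j.-1 != 0) /\
  (forall i, (i <= D)%N ->
     rho i = \prod_(1 <= j < i.+1)
               ((sigma j.-1 - eps * sigma j) / (sigma j - eps * sigma j.-1))).
Proof.
case: (graph_facts hG) => c0 a0 hdeg hcpos.
case: hsig => _ [[[_ s1ne] _] hfeas].
case: hrho => _ r1ne.
case: htp => [[th1 [hs0 hs]] [[th2 [hr0 hr]] [th3 [_ hp]]]].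
exact: (@alg R D a b c sigma rho th1 th2 th3 eps hD ha1 c0 a0 hdeg hcpos hs0 hr0 s1ne r1ne hs hr hp hfeas heps).
Qed.
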